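(* Let $s$ be a Sturmian word. Then there exists a coloring $c:\mathcal F^+ s\to\{0,1,2\}$ of the non-empty factors of $s$ such that for every factorization $s=V_1V_2\cdots V_n\cdots$ of $s$ into non-empty factors $V_i$, there exist integers $i,j$ with $c(V_i)\neq c(V_j)$. (For instance, $c(V)=0$ if $V$ is not a prefix of $s$, $c(V)=1$ if $V$ is a prefix of $s$ with $r_s(V)=a$, and $c(V)=2$ if $V$ is a prefix of $s$ with $r_s(V)=b$.)
   Context: A Sturmian word is an infinite word $s\in\{a,b\}^{\omega}$ that is aperiodic (not ultimately periodic) and balanced: for all factors $u,v$ of $s$ with $|u|=|v|$ one has $||u|_x-|v|_x|\le 1$ for $x\in\{a,b\}$, where $|u|_x$ is the number of occurrences of $x$ in $u$. $\mathcal F^+ s$ is the set of non-empty factors of $s$. A non-empty factor $w$ of $s$ is rich in the letter $z\in\{a,b\}$ if there is a factor $v$ of $s$ with $|v|=|w|$ and $|w|_z>|v|_z$; every non-empty factor of a Sturmian word is rich in exactly one letter, and $r_s(w)\in\{a,b\}$ denotes that letter. *)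

(* Defs.v *)
From mathcomp Require Import all_boot.
Set Implicit Arguments. Unset Strict Implicit. Unset Printing Implicit Defensive.

(* Alphabet {a,b}: letter a is [false], letter b is [true]. *)
Definition letter := bool.
Definition la : letter := false.
Definition lb : letter := true.

Definition infword := nat -> letter.

Definition factor_at (s : infword) (i n : nat) : seq letter :=
  mkseq (fun k => s (i + k)) n.

Definition is_factor (s : infword) (u : seq letter) : Prop :=
  exists i, u = factor_at s i (size u).

Definition is_nefactor (s : infword) (u : seq letter) : Prop :=
  size u > 0 /\ is_factor s u.

Definition occ (x : letter) (u : seq letter) : nat := count_mem x u.

Definition ultimately_periodic (s : infword) : Prop :=
  exists p n0, 0 < p /\ forall n, n0 <= n -> s (n + p) = s n.

Definition balanced (s : infword) : Prop :=
  forall u v, is_factor s u -> is_factor s v -> size u = size v ->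
  forall x : letter, occ x u <= occ x v + 1 /\ occ x v <= occ x u + 1.

Definition sturmian (s : infword) : Prop :=
  ~ ultimately_periodic s /\ balanced s.

(* A factorization s = V_0 V_1 V_2 ... into non-empty factors is given by
   its cut positions: f 0 = 0 and f strictly increasing; V_i = s[f i, f (i+1)). *)
Definition factorization (f : nat -> nat) : Prop :=
  f 0 = 0 /\ forall n, f n < f n.+1.

Definition block (s : infword) (f : nat -> nat) (i : nat) : seq letter :=
  factor_at s (f i) (f i.+1 - f i).

(* Main.v *)
Require Import Defs.
From mathcomp Require Import all_boot zify.
From Stdlib Require Import Classical ClassicalEpsilon.
Set Implicit Arguments. Unset Strict Implicit. Unset Printing Implicit Defensive.

Definition M (s : infword) (x : letter) q n := count_mem x (factor_at s q n).

Lemma M0 s x q : M s x q 0 = 0. Proof. by []. Qed.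

Lemma M_last s x q n : M s x q n.+1 = M s x q n + (s (q+n) == x).
Proof. by rewrite /M /factor_at mkseqS -cats1 count_cat /= addn0. Qed.

Lemma M_split s x q a b : M s x q (a+b) = M s x q a + M s x (q+a) b.
Proof.
elim: b => [|b IH]; first by rewrite addn0 M0 addn0.
by rewrite addnS !M_last IH addnA addnA.
Qed.

Lemma M_first s x q n : M s x q n.+1 = (s q == x) + M s x q.+1 n.
Proof.
rewrite -add1n M_split addn1; congr (_ + _).
by rewrite -addn1 M_last M0 addn0.
Qed.

Lemma M_eq s x p q n : (forall i, i < n -> s (p+i) = s (q+i)) -> M s x p n = M s x q n.
Proof.
elim: n => [|n IH] H //; rewrite !M_last IH ?H //.
by move=> i Hi; apply: H; apply: ltnW.
Qed.

Lemma M_le s x q n : M s x q n <= n.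
Proof. by rewrite /M -{2}(size_mkseq (fun k => s (q+k)) n) count_size. Qed.

Lemma bal_M s x q q' n : balanced s -> M s x q n <= M s x q' n + 1.
Proof.
move=> hb.
have F : forall r, is_factor s (factor_at s r n).
  by move=> r; exists r; rewrite size_mkseq.
have := hb _ _ (F q) (F q') _ x; rewrite !size_mkseq => /(_ erefl) [h _].
exact: h.
Qed.

Lemma bool3 (a b c : bool) : a != b -> (a == c) = false -> b = c.
Proof. by move: a b c; do 3!case. Qed.

Definition ltx (s : infword) (x : letter) a b := exists d,
  (forall i, i < d -> s (a+i) = s (b+i)) /\ s (a+d) != x /\ s (b+d) = x.

Lemma lemA s x p n : ~ ultimately_periodic s -> 0 < n ->
  (forall q, M s x q n <= M s x p n) -> ltx s x (p+n) p.
Proof.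
move=> hnp hn hmax.
have hex : exists i, s (p+i) != s (p+n+i).
  apply: NNPP => H; apply: hnp; exists n, p; split => // m hm.
  have := not_ex_all_not _ _ H (m - p); move/negP/negPn/eqP.
  have -> : p + n + (m - p) = m + n by lia.
  by have -> : p + (m - p) = m by lia.
case: (ex_minnP hex) => d hd hmin.
have agree : forall i, i < d -> s (p+i) = s (p+n+i).
  move=> i hi; apply/eqP; apply: contraTT hi => /hmin; rewrite -leqNgt.
  done.
case hx: (s (p+d) == x).
  exists d; split; first by move=> i hi; rewrite agree.
  move/eqP: hx => hx; rewrite hx in hd; split; last by [].
  by rewrite eq_sym.
have hx' : s (p+n+d) = x.
  exact: bool3 hd hx.
exfalso.
have e1 := M_split s x p n d.+1; rewrite M_last hx' eqxx addnA in e1.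
have e2 := M_split s x p d.+1 n; rewrite M_last hx in e2.
have e3 : M s x p d = M s x (p+n) d by apply: M_eq.
have := hmax (p + d.+1).
rewrite (_ : n + d.+1 = d.+1 + n) in e1; last by lia.
lia.
Qed.

Definition stretch (s : infword) p q B := forall i, i < B -> s (q+i) = s (q+p+i).

Lemma F2 s x p q : M s x q.+1 p + (s q == x) = M s x q p + (s (q+p) == x).
Proof. have := M_first s x q p; rewrite M_last; lia. Qed.

Lemma stretch_g s x p q B : stretch s p q B -> forall i, i <= B -> M s x (q+i) p = M s x q p.
Proof.
move=> hs; elim=> [|i IH] hi; first by rewrite addn0.
have := F2 s x p (q+i); rewrite hs; last by lia.
rewrite (_ : q + p + i = q + i + p); last by lia.
rewrite addnS IH; last by lia.
lia.
Qed.

Lemma stretch_M s x p q B : stretch s p q B -> forall r, r*p <= B + p ->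
  M s x q (r*p) = r * M s x q p.
Proof.
move=> hs; elim=> [|r IH] hr; first by rewrite mul0n.
rewrite mulSnr M_split IH; last by lia.
rewrite (stretch_g x hs); last by lia.
by rewrite mulSnr.
Qed.

Lemma M_sum s x Q p r : M s x Q (r*p) = \sum_(i<r) M s x (Q + i*p) p.
Proof.
elim: r => [|r IH]; first by rewrite mul0n big_ord0.
by rewrite mulSnr M_split IH big_ord_recr.
Qed.

Lemma reindex (F : nat -> nat) p r :
  \sum_(y < r*p) F y = \sum_(j<p) \sum_(i<r) F (j + i*p).
Proof.
elim: r => [|r IH].
  by rewrite mul0n big_ord0 big1 // => j _; rewrite big_ord0.
rewrite mulSnr big_split_ord /=; rewrite [X in X + _]IH -big_split /=; apply: eq_bigr => j _.
by rewrite big_ord_recr /= (addnC (r*p)).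
Qed.

Lemma cnt_mono (P : nat -> bool) a b : a <= b -> \sum_(y<a) P y <= \sum_(y<b) P y.
Proof.
elim: b => [|b IH] hab; first by rewrite leqn0 in hab; move/eqP: hab => ->.
case: (ltnP a b.+1) => h.
  rewrite big_ord_recr /=; apply: leq_trans (IH _) (leq_addr _ _); lia.
by have -> : a = b.+1 by lia.
Qed.

Lemma count_lemma (P : nat -> bool) p : 0 < p ->
  (forall j r, \sum_(i<r) P (j + i*p) <= 1) ->
  (forall N, exists y, N <= y /\ P y) -> False.
Proof.
move=> hp hsum hunb.
have build : forall k, exists N, k <= \sum_(y<N) P y.
  elim=> [|k [N hN]]; first by exists 0.
  have [y [hy Py]] := hunb N.
  exists y.+1; rewrite big_ord_recr /= Py.
  by change (nat_of_bool true) with 1; rewrite addn1 ltnS (leq_trans hN (cnt_mono P hy)).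
have [N hN] := build p.+1.
have h1 := cnt_mono P (_ : N <= N * p).
have h2 : \sum_(y < N*p) P y <= p.
  rewrite (reindex (fun y => nat_of_bool (P y))); apply: leq_trans (_ : \sum_(j<p) 1 <= p).
    by apply: leq_sum => j _; apply: hsum.
  by rewrite sum_nat_const card_ord muln1.
have := h1 ltac:(by rewrite leq_pmulr). lia.
Qed.

Lemma sum_const_nat r c : \sum_(i<r) c = r * c.
Proof. by rewrite sum_nat_const card_ord. Qed.

Local Notation G s p q := (M s true q p).

Lemma lemP s p : balanced s -> ~ ultimately_periodic s -> 0 < p ->
  exists B, forall q, ~ stretch s p q B.
Proof.
move=> hb hnp hp; apply: NNPP => H.
have hst : forall B, exists q, stretch s p q B.
  move=> B; apply: NNPP => H2; apply: H; exists B => q hq; apply: H2; by exists q.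
have Fg : forall q, G s p q.+1 = G s p q -> s (q+p) = s q.
  move=> q e; have := F2 s true p q; rewrite e.
  by case: (s q); case: (s (q+p)) => //= ; lia.
have unb : forall N, exists q, N <= q /\ G s p q.+1 <> G s p q.
  move=> N; apply: NNPP => H2; apply: hnp; exists p, N; split => // n hn.
  apply: Fg; apply: NNPP => H3; apply: H2; by exists n.
have [c [hc1 hc2]] : exists c, (forall q, c <= G s p q) /\ (forall q, G s p q <= c.+1).
  have [q [_ hq]] := unb 0.
  case: (ltngtP (G s p q.+1) (G s p q)) => h; last by [].
  - exists (G s p q.+1); split => q'.
      have := bal_M true q.+1 q' p hb;
      have := bal_M true q q' p hb; lia.
    have := bal_M true q' q.+1 p hb; lia.
  - exists (G s p q); split => q'.
      have := bal_M true q.+1 q' p hb;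
      have := bal_M true q q' p hb; lia.
    have := bal_M true q' q p hb;
    have := bal_M true q' q.+1 p hb; lia.
have gsum : forall j r, M s true j (r*p) = \sum_(i<r) G s p (j + i*p).
  by move=> j r; rewrite M_sum.
case: (classic (forall B, exists q, stretch s p q B /\ G s p q = c.+1)) => h.
- apply: (@count_lemma (fun y => G s p y == c) p hp).
    move=> j r.
    have [q [hq gq]] := h (r*p).
    have e1 := stretch_M true hq (leq_addr _ _).
    have e2 := bal_M true q j (r*p) hb.
    rewrite (gsum j) in e2; rewrite gq in e1.
    have e3 : \sum_(i<r) (G s p (j + i*p) + (G s p (j+i*p) == c)) = r * c.+1.
      rewrite -sum_const_nat; apply: eq_bigr => i _.
      have := hc1 (j + i*p); have := hc2 (j + i*p).
      case: eqP => //=; lia.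
    rewrite big_split /= in e3.
    move: e1 e2 e3.
    set S1 := \sum_(i<r) G s p (j + i*p).
    set S2 := \sum_(i<r) _.
    lia.
  move=> N; have [q [hq hne]] := unb N.
  have := hc1 q; have := hc2 q; have := hc1 q.+1; have := hc2 q.+1.
  case: (eqVneq (G s p q) c) => e.
    by exists q; rewrite e eqxx.
  exists q.+1; split; first lia. apply/eqP; lia.
- have [B0 hB0] : exists B0, forall q, stretch s p q B0 -> G s p q = c.
    have [B0 hB0] := not_all_ex_not _ _ h; exists B0 => q hq.
    have := hc1 q; have := hc2 q.
    have : G s p q <> c.+1 by move=> e; apply: hB0; exists q.
    lia.
  apply: (@count_lemma (fun y => G s p y == c.+1) p hp).
    move=> j r.
    have [q hq] := hst (B0 + r*p).
    have hq0 : stretch s p q B0 by move=> i hi; apply: hq; lia.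
    have gq := hB0 q hq0.
    have e1 := stretch_M true hq (_ : r*p <= B0 + r*p + p).
    have e2 := bal_M true j q (r*p) hb.
    rewrite (gsum j) in e2; rewrite gq in e1.
    have e3 : \sum_(i<r) (G s p (j + i*p)) = \sum_(i<r) (c + (G s p (j+i*p) == c.+1)).
      apply: eq_bigr => i _.
      have := hc1 (j + i*p); have := hc2 (j + i*p).
      case: eqP => //=; lia.
    rewrite big_split /= sum_const_nat in e3.
    have e4 := e1 ltac:(lia).
    move: e4 e2 e3.
    set S1 := \sum_(i<r) G s p (j + i*p).
    set S2 := \sum_(i<r) _.
    lia.
  move=> N; have [q [hq hne]] := unb N.
  have := hc1 q; have := hc2 q; have := hc1 q.+1; have := hc2 q.+1.
  case: (eqVneq (G s p q) c.+1) => e.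
    by exists q; rewrite e eqxx.
  exists q.+1; split; first lia. apply/eqP; lia.
Qed.

Lemma lemPu s d : balanced s -> ~ ultimately_periodic s ->
  exists B, forall p, 0 < p -> p <= d -> forall q, exists i, i < B /\ s (q+i) != s (q+p+i).
Proof.
move=> hb hnp.
have one : forall p B q, ~ stretch s p q B -> exists i, i < B /\ s (q+i) != s (q+p+i).
  move=> p B q hs; apply: NNPP => H; apply: hs => i hi; apply/eqP; apply: NNPP => H2.
  by apply: H; exists i; split => //; apply/negP.
elim: d => [|d [B hB]]; first by exists 0 => p hp hp0; lia.
case: (posnP d.+1) => // _.
have [B1 hB1] := lemP hb hnp (ltn0Sn d).
exists (B + B1) => p hp hpd q.
case: (ltnP p d.+1) => hpl.
  have [i [hi hd]] := hB p hp hpl q; exists i; split => //; lia.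
have -> : p = d.+1 by lia.
have [i [hi hd]] := one _ _ q (hB1 q); exists i; split => //; lia.
Qed.

Fixpoint valw (w : nat -> bool) (x : bool) n :=
  if n is n'.+1 then 2 * valw w x n' + (w n' == x) else 0.

Lemma valS w x n : valw w x n.+1 = 2 * valw w x n + (w n == x).
Proof. by []. Qed.

Lemma dbl_lt a a' (b b' : bool) : a < a' -> 2 * a + b < 2 * a' + b'.
Proof. by case: b; case: b'; cbn [nat_of_bool]; lia. Qed.

Lemma val_eq w w' x n : (forall i, i < n -> w i = w' i) -> valw w x n = valw w' x n.
Proof.
elim: n => [|n IH] h //=; rewrite IH ?h //; move=> i hi; apply: h; lia.
Qed.

Lemma val_lt w w' x e n : (forall i, i < e -> w i = w' i) -> w e != x -> w' e = x ->
  e < n -> valw w x n < valw w' x n.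
Proof.
move=> h1 h2 h3 hen.
suff: forall m, valw w x (e.+1 + m) < valw w' x (e.+1 + m).
  by move/(_ (n - e.+1)); rewrite subnKC.
elim=> [|m IH].
  rewrite addn0 /= (val_eq x h1) h3 eqxx (negbTE h2) /=; lia.
rewrite addnS !valS.
exact: dbl_lt.
Qed.

Lemma mainL s x f : balanced s -> ~ ultimately_periodic s -> factorization f ->
  (forall k i, i < f k.+1 - f k -> s (f k + i) = s i) ->
  (forall k q, M s x q (f k.+1 - f k) <= M s x (f k) (f k.+1 - f k)) -> False.
Proof.
move=> hb hnp [f0 finc] hpre hmax.
have fmono : forall j k, j < k -> f j < f k.
  move=> j; elim=> [|k IH] hjk //.
  case: (ltnP j k) => h; first by have := finc k; have := IH h; lia.
  by have -> : j = k by lia.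
have comp : forall j k, j < k -> forall q, M s x q (f k - f j) <= M s x (f j) (f k - f j).
  move=> j; elim=> [|k IH] hjk //.
  case: (ltnP j k) => h; last first.
    by have -> : j = k by lia.
  move=> q.
  have hj := fmono _ _ h; have hk := finc k.
  rewrite (_ : f k.+1 - f j = (f k - f j) + (f k.+1 - f k)); last by lia.
  rewrite !M_split (_ : f j + (f k - f j) = f k); last by lia.
  by apply: leq_add; [apply: IH | apply: hmax].
have chain : forall j k, j < k -> ltx s x (f k) (f j).
  move=> j k hjk; have hj := fmono _ _ hjk.
  have := lemA (p := f j) (n := f k - f j) hnp ltac:(lia) (comp j k hjk).
  by rewrite (_ : f j + (f k - f j) = f k); last by lia.
have [d [agd [d1 d2]]] := chain 0 1 erefl.
rewrite f0 add0n in d2.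
have {}agd : forall i, i < d -> s (f 1 + i) = s i by move=> i hi; rewrite agd // f0 add0n.
have nk : forall k, 0 < k -> f k.+1 - f k <= d.
  move=> k hk; rewrite leqNgt; apply/negP => hdk.
  have pk : forall i, i <= d -> s (f k + i) = s i by move=> i hi; apply: hpre; lia.
  case: (eqVneq k 1) => [ek|nk1].
    by subst k; move: d1; rewrite pk // d2 eqxx.
  have [e [age [e1 e2]]] := chain 1 k ltac:(lia).
  case: (ltngtP e d) => hed.
  - move: e1; rewrite pk; last by lia.
    by rewrite -agd // e2 eqxx.
  - have := age d hed; rewrite pk // d2 => e3.
    by move: d1; rewrite -e3 eqxx.
  - subst e; move: e1; rewrite pk // d2 eqxx //.
have [B hB] := lemPu d hb hnp.
pose v k := valw (fun i => (s (f k + i) : bool)) (x : bool) B.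
have step : forall k, 0 < k -> v k.+1 < v k.
  move=> k hk.
  have [e [age [e1 e2]]] := chain k k.+1 (ltnSn k).
  have hn := finc k.
  have [i [hi hdi]] := hB (f k.+1 - f k) ltac:(lia) (nk k hk) (f k).
  rewrite (_ : f k + (f k.+1 - f k) = f k.+1) in hdi; last by lia.
  have hei : e <= i.
    rewrite leqNgt; apply/negP => hie; move: hdi; rewrite (age i hie) eqxx //.
  apply: (val_lt (e := e)) => //; last by lia.
have desc : forall k, v k.+2 + k <= v 1.
  elim=> [|k IH]; first by rewrite addn0; apply: ltnW; apply: step.
  have := step k.+2 erefl; lia.
have := desc (v 1).+1; lia.
Qed.

Definition isMax (s : infword) (V : seq letter) : Prop :=
  forall q, M s true q (size V) <= count_mem true V.

Definition colN (s : infword) (V : seq letter) : nat :=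
  if V == factor_at s 0 (size V) then
    (if excluded_middle_informative (isMax s V) then 1 else 2) else 0.

Lemma colN_le s V : colN s V < 3.
Proof. rewrite /colN; case: (_ == _) => //; by case: excluded_middle_informative. Qed.

Lemma M_tf s q n : M s false q n + M s true q n = n.
Proof.
elim: n => [|n IH] //; rewrite !M_last; move: IH.
by case: (s (q+n)) => /=; lia.
Qed.

Lemma size_block s f i : size (block s f i) = f i.+1 - f i.
Proof. by rewrite /block /factor_at size_mkseq. Qed.

Theorem mainTheorem8 (s : infword) (hs : sturmian s) :
  exists c : seq letter -> 'I_3,
    forall f : nat -> nat, factorization f ->
      exists i j, c (block s f i) != c (block s f j).
Proof.
case: hs => hnp hb.
exists (fun V => inord (colN s V)) => f hf.
apply: NNPP => H.
have all : forall i, colN s (block s f i) = colN s (block s f 0).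
  move=> i; apply: NNPP => H2; apply: H; exists i, 0.
  apply/negP => /eqP /(congr1 (@nat_of_ord 3)).
  by rewrite !inordK ?colN_le.
have [f0 finc] := hf.
have pre0 : block s f 0 == factor_at s 0 (size (block s f 0)).
  by rewrite size_block /block f0.
have c0 : colN s (block s f 0) != 0.
  by rewrite /colN pre0; case: excluded_middle_informative.
have pre : forall k, block s f k == factor_at s 0 (size (block s f k)).
  move=> k; apply/negPn/negP => hn; move: c0; by rewrite -(all k) /colN (negbTE hn).
have hpre : forall k i, i < f k.+1 - f k -> s (f k + i) = s i.
  move=> k i hi; have := pre k; rewrite size_block /block => /eqP e.
  have := congr1 (nth false ^~ i) e; rewrite /factor_at !nth_mkseq //.
have mk : forall k, count_mem true (block s f k) = M s true (f k) (f k.+1 - f k) by [].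
have hc := colN_le s (block s f 0).
case e0: (colN s (block s f 0)) hc c0 => [|[|[|]]] // _ _.
- apply: (mainL (x:=true) hb hnp hf hpre) => k q.
  have := all k; rewrite e0 /colN (pre k); case: excluded_middle_informative => // hm _.
  by have := hm q; rewrite size_block mk.
- apply: (mainL (x:=false) hb hnp hf hpre) => k q.
  have := all k; rewrite e0 /colN (pre k); case: excluded_middle_informative => // hm _.
  have [q0 hq0] := not_all_ex_not _ _ hm.
  rewrite size_block mk in hq0.
  have h1 := bal_M true q0 q (f k.+1 - f k) hb.
  have h2 := M_tf s q (f k.+1 - f k).
  have h3 := M_tf s (f k) (f k.+1 - f k).
  lia.
Qed.
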